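(* Let $\lambda>0$, $\ell>0$. Every curve $\gamma\in\omega$ is embedded (injective on $[0,1]$).
   Context: Elliptic functions: for $q\in[0,1)$, $x\in\mathbb{R}$, $\mathrm{F}(x,q)=\int_0^x(1-q^2\sin^2\theta)^{-1/2}\,d\theta$, $\mathrm{E}(x,q)=\int_0^x(1-q^2\sin^2\theta)^{1/2}\,d\theta$, $\mathrm{K}(q)=\mathrm{F}(\pi/2,q)$, $\mathrm{E}(q)=\mathrm{E}(\pi/2,q)$; $\mathrm{am}(\cdot,q)$ is the inverse of $x\mapsto\mathrm{F}(x,q)$, $\mathrm{cn}(x,q)=\cos\mathrm{am}(x,q)$. The function $q\mapsto2\mathrm{E}(q)-\mathrm{K}(q)$ is strictly decreasing on $[0,1)$ with unique zero $q_*\in(0,1)$. On $[1/\sqrt2,1)$ let $f(q)=(4q^4-5q^2+1)\mathrm{K}(q)+(-8q^4+8q^2-1)\mathrm{E}(q)$ and $g(q)=8(2\mathrm{E}(q)-\mathrm{K}(q))^2(2q^2-1)$. $f$ has a unique zero $\hat q\in[1/\sqrt2,1)$; $\hat\lambda:=g(\hat q)\approx0.70107$. $g(1/\sqrt2)=0$, $g$ strictly increasing on $[1/\sqrt2,\hat q]$, strictly decreasing on $[\hat q,q_*]$. For $c\in(0,\hat\lambda]$ let $q_1(c)\in(1/\sqrt2,\hat q]$, $q_2(c)\in[\hat q,q_* )$ solve $g(q)=c$. $A_\ell=\{\gamma\in W^{2,2}(0,1;\mathbb{R}^2): |\gamma'|\neq0$ on $[0,1]$, $\gamma(0)=(0,0),\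 \gamma(1)=(\ell,0)\}$. For $\lambda\ell^2\le\hat\lambda$, $\gamma_{\rm sarc}^{\lambda,\ell,1}:[0,2\mathrm{K}(q)/\alpha]\to\mathbb{R}^2$ is $\gamma(s)=\frac1\alpha\big(2\mathrm{E}(\mathrm{am}(\alpha s-\mathrm{K}(q),q),q)+2\mathrm{E}(q)-\alpha s,\ 2q\,\mathrm{cn}(\alpha s-\mathrm{K}(q),q)\big)$ with $q=q_1(\lambda\ell^2)$, $\alpha=\frac{2}{\ell}(2\mathrm{E}(q)-\mathrm{K}(q))$, and $\gamma_{\rm larc}^{\lambda,\ell,1}$ is the same formula with $q=q_2(\lambda\ell^2)$; $\bar\gamma_{\rm sarc}^{\lambda,\ell,1},\bar\gamma_{\rm larc}^{\lambda,\ell,1}:[0,1]\to\mathbb{R}^2$ are their constant-speed reparametrizations, and $\gamma_{\rm seg}:[0,1]\to\mathbb{R}^2$, $\gamma_{\rm seg}(x)=(\ell x,0)$, is the line segment. The set $\omega\subset A_\ell$ is $\{\gamma_{\rm seg},\bar\gamma_{\rm larc}^{\lambda,\ell,1},\bar\gamma_{\rm sarc}^{\lambda,\ell,1}\}$ if $\lambda\ell^2\le\hat\lambda$, and $\{\gamma_{\rm seg}\}$ if $\lambda\ell^2>\hat\lambda$. *)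

(* Defs.v *)
From Stdlib Require Import Reals ClassicalEpsilon.
From Coquelicot Require Import Coquelicot.
Open Scope R_scope.

Definition ellF (x q : R) : R :=
  RInt (fun t => / sqrt (1 - q ^ 2 * (sin t) ^ 2)) 0 x.
Definition ellE (x q : R) : R :=
  RInt (fun t => sqrt (1 - q ^ 2 * (sin t) ^ 2)) 0 x.

Definition ellK (q : R) : R := ellF (PI / 2) q.
Definition ellEc (q : R) : R := ellE (PI / 2) q.

(* Jacobi amplitude: the inverse of x |-> F(x,q)
   (F(.,q) is a strictly increasing bijection R -> R for 0 <= q < 1). *)
Definition am (u q : R) : R :=
  epsilon (inhabits 0) (fun x => ellF x q = u).
Definition cn (u q : R) : R := cos (am u q).

Definition qstar : R :=
  epsilon (inhabits 0) (fun q => 0 < q < 1 /\ 2 * ellEc q - ellK q = 0).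

Definition f_ell (q : R) : R :=
  (4 * q ^ 4 - 5 * q ^ 2 + 1) * ellK q + (- 8 * q ^ 4 + 8 * q ^ 2 - 1) * ellEc q.
Definition g_ell (q : R) : R :=
  8 * (2 * ellEc q - ellK q) ^ 2 * (2 * q ^ 2 - 1).

Definition qhat : R :=
  epsilon (inhabits 0) (fun q => / sqrt 2 <= q < 1 /\ f_ell q = 0).
Definition lamhat : R := g_ell qhat.

Definition q1 (c : R) : R :=
  epsilon (inhabits 0) (fun q => / sqrt 2 < q <= qhat /\ g_ell q = c).
Definition q2 (c : R) : R :=
  epsilon (inhabits 0) (fun q => qhat <= q < qstar /\ g_ell q = c).

(* Plane curves are maps R -> R * R (only their values on the parameter
   interval matter). *)
Definition curve := R -> (R * R)%type.

Definition alpha_of (q l : R) : R := 2 / l * (2 * ellEc q - ellK q).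

(* The elastica formula, on [0, 2K(q)/alpha]. *)
Definition gamma_formula (q l : R) : curve := fun s =>
  let a := alpha_of q l in
  ( / a * (2 * ellE (am (a * s - ellK q) q) q + 2 * ellEc q - a * s),
    / a * (2 * q * cn (a * s - ellK q) q) ).

(* The curves gamma_formula are parametrized by arclength (|gamma'| = 1),
   so their constant-speed reparametrization on [0,1] is x |-> c (L x). *)
Definition reparam01 (c : curve) (L : R) : curve := fun x => c (L * x).

Definition gamma_bar (q l : R) : curve :=
  reparam01 (gamma_formula q l) (2 * ellK q / alpha_of q l).

Definition gamma_sarc_bar (lam l : R) : curve := gamma_bar (q1 (lam * l ^ 2)) l.
Definition gamma_larc_bar (lam l : R) : curve := gamma_bar (q2 (lam * l ^ 2)) l.
Definition gamma_seg (l : R) : curve := fun x => (l * x, 0).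

Definition omega (lam l : R) (c : curve) : Prop :=
  if Rle_dec (lam * l ^ 2) lamhat then
    c = gamma_seg l \/ c = gamma_larc_bar lam l \/ c = gamma_sarc_bar lam l
  else c = gamma_seg l.

(* Main.v *)
Require Import Defs.
From Stdlib Require Import Reals ClassicalEpsilon Lra Psatz.
From Coquelicot Require Import Coquelicot.
Open Scope R_scope.

Definition kf (q t : R) : R := / sqrt (1 - q ^ 2 * (sin t) ^ 2).
Definition ef (q t : R) : R := sqrt (1 - q ^ 2 * (sin t) ^ 2).

Lemma sin2_bnd t : 0 <= sin t ^ 2 <= 1.
Proof. pose proof (sin2 t). pose proof (cos2 t). unfold Rsqr in *. split; nra. Qed.

Lemma arg_pos q t : q ^ 2 < 1 -> 1 - q ^ 2 <= 1 - q ^ 2 * sin t ^ 2 /\ 1 - q^2 * sin t ^ 2 <= 1.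
Proof. intros Hq. pose proof (sin2_bnd t). split; nra. Qed.

Lemma kf_cont q t : q ^ 2 < 1 -> continuous (kf q) t.
Proof.
  intros Hq. apply (@ex_derive_continuous R_AbsRing R_NormedModule). unfold kf.
  destruct (arg_pos q t Hq).
  auto_derive. split. lra. split; [|easy].
  apply Rgt_not_eq, sqrt_lt_R0; lra.
Qed.

Lemma ef_cont q t : q ^ 2 < 1 -> continuous (ef q) t.
Proof.
  intros Hq. apply (@ex_derive_continuous R_AbsRing R_NormedModule). unfold ef.
  destruct (arg_pos q t Hq).
  auto_derive. lra.
Qed.

Lemma kf_ex q a b : q ^ 2 < 1 -> ex_RInt (kf q) a b.
Proof. intros Hq. apply (@ex_RInt_continuous R_CompleteNormedModule). intros; apply kf_cont; auto. Qed.
Lemma ef_ex q a b : q ^ 2 < 1 -> ex_RInt (ef q) a b.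
Proof. intros Hq. apply (@ex_RInt_continuous R_CompleteNormedModule). intros; apply ef_cont; auto. Qed.

Lemma kf_ge1 q t : q ^ 2 < 1 -> 1 <= kf q t.
Proof.
  intros Hq. destruct (arg_pos q t Hq). unfold kf.
  assert (0 < sqrt (1 - q ^ 2 * sin t ^ 2)) by (apply sqrt_lt_R0; lra).
  assert (sqrt (1 - q ^ 2 * sin t ^ 2) <= 1).
  { apply Rle_trans with (sqrt 1); [apply sqrt_le_1_alt; lra | rewrite sqrt_1; lra]. }
  apply Rle_trans with (/ 1); [rewrite Rinv_1; lra| apply Rinv_le_contravar; lra].
Qed.

Lemma kf_le q t : q ^ 2 < 1 -> kf q t <= / sqrt (1 - q ^ 2).
Proof.
  intros Hq. destruct (arg_pos q t Hq). unfold kf.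
  apply Rinv_le_contravar. apply sqrt_lt_R0; lra. apply sqrt_le_1_alt; lra.
Qed.

Lemma ef_ge q t : q ^ 2 < 1 -> sqrt (1 - q ^ 2) <= ef q t.
Proof. intros Hq. destruct (arg_pos q t Hq). unfold ef. apply sqrt_le_1_alt; lra. Qed.

Lemma ef_le1 q t : q ^ 2 < 1 -> ef q t <= 1.
Proof. intros Hq. destruct (arg_pos q t Hq). unfold ef. apply Rle_trans with (sqrt 1); [apply sqrt_le_1_alt; lra | rewrite sqrt_1; lra]. Qed.

Lemma kf_even q t : kf q (- t) = kf q t.
Proof. unfold kf. rewrite sin_neg. f_equal. f_equal. ring. Qed.
Lemma ef_even q t : ef q (- t) = ef q t.
Proof. unfold ef. rewrite sin_neg. f_equal. ring. Qed.

Lemma RInt_odd (f : R -> R) x : (forall a b, ex_RInt f a b) -> (forall t, f (- t) = f t) ->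
  RInt f 0 (- x) = - RInt f 0 x.
Proof.
  intros Hex Hev.
  assert (H := RInt_comp_lin f (-1) 0 0 x).
  replace (-1 * 0 + 0) with 0 in H by ring.
  replace (-1 * x + 0) with (- x) in H by ring.
  rewrite <- H by apply Hex.
  rewrite (RInt_ext _ (fun y => opp (f y))).
  rewrite (RInt_opp (V:=R_CompleteNormedModule)) by apply Hex. reflexivity.
  intros y _. unfold scal; simpl. unfold mult, opp; simpl.
  replace (-1 * y + 0) with (- y) by ring. rewrite Hev. unfold opp; simpl. ring.
Qed.

Lemma RInt_diff (f : R -> R) a b c : (forall x y, ex_RInt f x y) ->
  RInt f a c - RInt f a b = RInt f b c.
Proof.
  intros Hex. rewrite <- (RInt_Chasles (V:=R_CompleteNormedModule) f a b c) by apply Hex.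
  unfold plus; simpl. ring.
Qed.

Lemma RInt_lower (f : R -> R) a b m : a <= b -> ex_RInt f a b ->
  (forall t, a <= t <= b -> m <= f t) -> (b - a) * m <= RInt f a b.
Proof.
  intros Hab Hex Hm.
  assert (RInt (fun _ => m) a b <= RInt f a b).
  { apply RInt_le; auto. apply ex_RInt_const. intros; apply Hm; lra. }
  rewrite RInt_const in H. unfold scal in H; simpl in H. unfold mult in H; simpl in H. lra.
Qed.

Lemma RInt_upper (f : R -> R) a b m : a <= b -> ex_RInt f a b ->
  (forall t, a <= t <= b -> f t <= m) -> RInt f a b <= (b - a) * m.
Proof.
  intros Hab Hex Hm.
  assert (RInt f a b <= RInt (fun _ => m) a b).
  { apply RInt_le; auto. apply ex_RInt_const. intros; apply Hm; lra. }
  rewrite RInt_const in H. unfold scal in H; simpl in H. unfold mult in H; simpl in H. lra.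
Qed.

Lemma RInt_abs_bound (f : R -> R) a b M : (forall x y, ex_RInt f x y) ->
  (forall t, Rabs (f t) <= M) -> Rabs (RInt f a b) <= M * Rabs (b - a).
Proof.
  intros Hex HM. destruct (Rle_or_lt a b) as [H|H].
  - rewrite (Rabs_right (b - a)) by lra. rewrite Rmult_comm. apply abs_RInt_le_const; auto.
  - rewrite <- (opp_RInt_swap (V:=R_CompleteNormedModule)) by apply Hex.
    unfold opp; simpl. rewrite Rabs_Ropp. rewrite (Rabs_left (b - a)) by lra.
    replace (- (b - a)) with (a - b) by ring. rewrite Rmult_comm.
    apply abs_RInt_le_const; auto; lra.
Qed.

Lemma F_diff q x y : q ^ 2 < 1 -> ellF y q - ellF x q = RInt (kf q) x y.
Proof. intros Hq. apply (RInt_diff (kf q)). intros; apply kf_ex; auto. Qed.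

Lemma F_strict q x y : q ^ 2 < 1 -> x < y -> ellF x q < ellF y q.
Proof.
  intros Hq Hxy. assert (H := F_diff q x y Hq).
  assert ((y - x) * 1 <= RInt (kf q) x y).
  { apply RInt_lower. lra. apply kf_ex; auto. intros; apply kf_ge1; auto. }
  lra.
Qed.

Lemma F_lip q x y : q ^ 2 < 1 -> Rabs (ellF y q - ellF x q) <= / sqrt (1 - q ^ 2) * Rabs (y - x).
Proof.
  intros Hq. rewrite F_diff by auto. apply RInt_abs_bound.
  intros; apply kf_ex; auto.
  intros t. pose proof (kf_ge1 q t Hq). rewrite Rabs_right by lra. apply kf_le; auto.
Qed.

Lemma F_odd q x : q ^ 2 < 1 -> ellF (- x) q = - ellF x q.
Proof. intros Hq. apply (RInt_odd (kf q)). intros; apply kf_ex; auto. apply kf_even. Qed.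

Lemma E_odd q x : q ^ 2 < 1 -> ellE (- x) q = - ellE x q.
Proof. intros Hq. apply (RInt_odd (ef q)). intros; apply ef_ex; auto. apply ef_even. Qed.

Lemma F_0 q : ellF 0 q = 0.
Proof. unfold ellF. exact (RInt_point (V:=R_CompleteNormedModule) 0 (kf q)). Qed.

Lemma lip_cont (f : R -> R) x0 C r : 0 < r -> 0 <= C ->
  (forall x, Rabs (x - x0) < r -> Rabs (f x - f x0) <= C * Rabs (x - x0)) -> continuity_pt f x0.
Proof.
  intros Hr HC H. unfold continuity_pt, continue_in, limit1_in, limit_in. simpl.
  intros eps Heps. exists (Rmin r (eps / (C + 1))). split.
  apply Rmin_pos; auto. apply Rdiv_lt_0_compat; lra.
  intros x [_ Hx]. unfold R_dist in *.
  assert (Hx1 : Rabs (x - x0) < r) by (eapply Rlt_le_trans; [apply Hx| apply Rmin_l]).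
  assert (Hx2 : Rabs (x - x0) < eps / (C + 1)) by (eapply Rlt_le_trans; [apply Hx| apply Rmin_r]).
  eapply Rle_lt_trans. apply H; auto.
  assert (Rabs (x - x0) * (C + 1) < eps).
  { apply Rmult_lt_reg_r with (/ (C+1)). apply Rinv_0_lt_compat; lra.
    rewrite Rmult_assoc, Rinv_r by lra. rewrite Rmult_1_r. exact Hx2. }
  pose proof (Rabs_pos (x - x0)). nra.
Qed.

Lemma F_cont q x : q ^ 2 < 1 -> continuity_pt (fun y => ellF y q) x.
Proof.
  intros Hq. apply lip_cont with (/ sqrt (1 - q ^ 2)) 1. lra.
  left. apply Rinv_0_lt_compat, sqrt_lt_R0; lra.
  intros y _. apply F_lip; auto.
Qed.

Lemma IVT_incr (f : R -> R) a b y : a <= b -> (forall x, a <= x <= b -> continuity_pt f x) ->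
  f a <= y <= f b -> exists x, a <= x <= b /\ f x = y.
Proof.
  intros Hab Hc [H1 H2].
  destruct (Req_dec (f a) y) as [E|E]. exists a; split; auto; lra.
  destruct (Req_dec (f b) y) as [E'|E']. exists b; split; auto; lra.
  assert (a < b). { destruct Hab; auto. subst. lra. }
  destruct (Ranalysis5.IVT_interv (fun x => f x - y) a b) as [z [Hz Hz']]; auto.
  intros x Hx. apply continuity_pt_minus. apply Hc; auto. apply continuity_pt_const. intros u v; auto.
  lra. lra. exists z. split; auto. simpl in Hz'. lra.
Qed.

Lemma IVT_decr (f : R -> R) a b y : a <= b -> (forall x, a <= x <= b -> continuity_pt f x) ->
  f b <= y <= f a -> exists x, a <= x <= b /\ f x = y.
Proof.
  intros Hab Hc H.
  destruct (IVT_incr (fun x => - f x) a b (- y)) as [x [Hx Hx']]; auto.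
  intros x Hx. apply continuity_pt_opp. apply Hc; auto. lra.
  exists x. split; auto. lra.
Qed.

Lemma am_spec q u : q ^ 2 < 1 -> - ellK q <= u <= ellK q ->
  ellF (am u q) q = u /\ - (PI / 2) <= am u q <= PI / 2.
Proof.
  intros Hq Hu.
  assert (Hex : exists x, ellF x q = u).
  { destruct (IVT_incr (fun x => ellF x q) (- (PI/2)) (PI/2) u) as [x [_ Hx]].
    pose proof PI_RGT_0. lra. intros; apply F_cont; auto.
    rewrite F_odd by auto. unfold ellK in Hu. lra. exists x; auto. }
  pose proof (epsilon_spec (inhabits 0) (fun x => ellF x q = u) Hex) as H.
  fold (am u q) in H. split; auto.
  unfold ellK in Hu. split.
  - destruct (Rle_or_lt (- (PI/2)) (am u q)) as [h|h]; auto.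
    apply F_strict with (q := q) in h; auto. rewrite F_odd in h; lra.
  - destruct (Rle_or_lt (am u q) (PI/2)) as [h|h]; auto.
    apply F_strict with (q := q) in h; auto. lra.
Qed.

Definition psi (q t : R) : R := 2 * ef q t - kf q t.

Lemma psi_ex q a b : q ^ 2 < 1 -> ex_RInt (psi q) a b.
Proof.
  intros Hq. unfold psi.
  apply (ex_RInt_minus (V:=R_CompleteNormedModule) (fun t => 2 * ef q t) (kf q)).
  apply (ex_RInt_scal (V:=R_CompleteNormedModule) (ef q) a b 2). apply ef_ex; auto.
  apply kf_ex; auto.
Qed.

Lemma EF_diff q x : q ^ 2 < 1 -> 2 * ellE x q - ellF x q = RInt (psi q) 0 x.
Proof.
  intros Hq. unfold psi.
  rewrite (RInt_minus (V:=R_CompleteNormedModule) (fun t => 2 * ef q t) (kf q)).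
  assert (E2 : RInt (fun t => 2 * ef q t) 0 x = 2 * RInt (ef q) 0 x).
  { exact (RInt_scal (V:=R_CompleteNormedModule) (ef q) 0 x 2 (ef_ex q 0 x Hq)). }
  rewrite E2. reflexivity.
  apply (ex_RInt_scal (V:=R_CompleteNormedModule) (ef q) 0 x 2). apply ef_ex; auto.
  apply kf_ex; auto.
Qed.

Lemma phi_dec r r' : 0 <= r <= r' -> r' < 1 ->
  2 * sqrt (1 - r') - / sqrt (1 - r') <= 2 * sqrt (1 - r) - / sqrt (1 - r).
Proof.
  intros H1 H2.
  assert (sqrt (1 - r') <= sqrt (1 - r)) by (apply sqrt_le_1_alt; lra).
  assert (0 < sqrt (1 - r')) by (apply sqrt_lt_R0; lra).
  assert (/ sqrt (1 - r) <= / sqrt (1 - r')) by (apply Rinv_le_contravar; lra).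
  lra.
Qed.

Lemma psi_mono_q q q' t : 0 <= q <= q' -> q' ^ 2 < 1 -> psi q' t <= psi q t.
Proof.
  intros H1 H2. unfold psi, ef, kf. pose proof (sin2_bnd t).
  apply phi_dec. split. nra. assert (q ^ 2 <= q' ^ 2) by nra. nra. nra.
Qed.

Lemma psi_mono_t q t t' : q ^ 2 < 1 -> 0 <= t <= t' -> t' <= PI / 2 -> psi q t' <= psi q t.
Proof.
  intros Hq H1 H2. unfold psi, ef, kf. pose proof (sin2_bnd t'). pose proof PI_RGT_0.
  assert (0 <= sin t) by (apply sin_ge_0; lra).
  assert (sin t <= sin t') by (apply sin_incr_1; lra).
  assert (q ^ 2 >= 0) by nra.
  apply phi_dec. split. nra. assert (sin t ^ 2 <= sin t' ^ 2) by nra. nra. nra.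
Qed.

Definition hq (q : R) : R := 2 * ellEc q - ellK q.

Lemma hq_int q : q ^ 2 < 1 -> hq q = RInt (psi q) 0 (PI / 2).
Proof. intros; unfold hq, ellEc, ellK; apply EF_diff; auto. Qed.

Lemma hq_mono q q' : 0 <= q <= q' -> q' ^ 2 < 1 -> hq q' <= hq q.
Proof.
  intros H1 H2. assert (q ^ 2 < 1) by nra. rewrite !hq_int by auto.
  pose proof PI_RGT_0.
  apply RInt_le. lra. apply psi_ex; auto. apply psi_ex; auto.
  intros; apply psi_mono_q; auto.
Qed.

Lemma H_pos q th : q ^ 2 < 1 -> 0 < hq q -> 0 < th <= PI / 2 -> 0 < 2 * ellE th q - ellF th q.
Proof.
  intros Hq Hh Hth. rewrite EF_diff by auto. rewrite hq_int in Hh by auto.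
  destruct (Rlt_or_le 0 (psi q th)) as [P|P].
  - assert ((th - 0) * psi q th <= RInt (psi q) 0 th).
    { apply RInt_lower. lra. apply psi_ex; auto. intros; apply psi_mono_t; lra. }
    nra.
  - assert (RInt (psi q) th (PI/2) <= (PI/2 - th) * 0).
    { apply RInt_upper. lra. apply psi_ex; auto. intros t Ht.
      apply Rle_trans with (psi q th). apply psi_mono_t; lra. lra. }
    rewrite <- (RInt_diff (psi q) 0 th (PI/2)) in H. lra.
    intros; apply psi_ex; auto.
Qed.

Lemma K_pos q : q ^ 2 < 1 -> 0 < ellK q.
Proof. intros Hq. unfold ellK. rewrite <- (F_0 q). apply F_strict; auto. pose proof PI_RGT_0; lra. Qed.

Lemma cos_eq_pm a b : - (PI/2) <= a <= PI/2 -> - (PI/2) <= b <= PI/2 -> cos a = cos b -> b = a \/ b = - a.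
Proof.
  intros Ha Hb H. pose proof PI_RGT_0.
  assert (Rabs a = Rabs b).
  { apply cos_inj. split; [apply Rabs_pos| unfold Rabs; destruct Rcase_abs; lra].
    split; [apply Rabs_pos| unfold Rabs; destruct Rcase_abs; lra].
    unfold Rabs; destruct Rcase_abs; destruct Rcase_abs; rewrite ?cos_neg; auto. }
  revert H1; unfold Rabs; destruct Rcase_abs; destruct Rcase_abs; intros; lra.
Qed.

Lemma EF_zero q th : q ^ 2 < 1 -> 0 < hq q -> - (PI/2) <= th <= PI/2 ->
  2 * ellE th q - ellF th q = 0 -> th = 0.
Proof.
  intros Hq Hh Hth H.
  destruct (Rtotal_order th 0) as [L|[L|L]]; auto.
  - assert (0 < 2 * ellE (- th) q - ellF (- th) q) by (apply H_pos; auto; lra).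
    rewrite E_odd, F_odd in H0 by auto. lra.
  - assert (0 < 2 * ellE th q - ellF th q) by (apply H_pos; auto; lra). lra.
Qed.

Lemma gamma_bar_inj q l : 0 < q < 1 -> 0 < hq q -> 0 < l ->
  forall x y, 0 <= x <= 1 -> 0 <= y <= 1 -> gamma_bar q l x = gamma_bar q l y -> x = y.
Proof.
  intros Hq Hh Hl x y Hx Hy H.
  assert (Hq2 : q ^ 2 < 1) by nra.
  pose proof (K_pos q Hq2) as HK.
  assert (Ha : 0 < alpha_of q l).
  { unfold alpha_of. fold (hq q). apply Rmult_lt_0_compat; auto. apply Rdiv_lt_0_compat; lra. }
  unfold gamma_bar, reparam01, gamma_formula in H. cbv zeta in H.
  set (a := alpha_of q l) in *.
  replace (a * (2 * ellK q / a * x)) with (2 * ellK q * x) in H by (field; lra).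
  replace (a * (2 * ellK q / a * y)) with (2 * ellK q * y) in H by (field; lra).
  injection H as H1 H2.
  set (u := 2 * ellK q * x - ellK q) in *.
  set (v := 2 * ellK q * y - ellK q) in *.
  assert (Hu : - ellK q <= u <= ellK q) by (unfold u; nra).
  assert (Hv : - ellK q <= v <= ellK q) by (unfold v; nra).
  destruct (am_spec q u Hq2 Hu) as [Fu Ru].
  destruct (am_spec q v Hq2 Hv) as [Fv Rv].
  assert (Hc : cn u q = cn v q).
  { apply Rmult_eq_reg_l in H2. 2: apply Rgt_not_eq, Rinv_0_lt_compat; lra.
    apply Rmult_eq_reg_l in H2; lra. }
  unfold cn in Hc.
  destruct (cos_eq_pm _ _ Ru Rv Hc) as [E|E].
  - assert (u = v) by (rewrite <- Fu, <- Fv, E; reflexivity).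
    unfold u, v in H. nra.
  - apply Rmult_eq_reg_l in H1. 2: apply Rgt_not_eq, Rinv_0_lt_compat; lra.
    rewrite E, E_odd in H1 by auto.
    assert (v = - u) by (rewrite <- Fu, <- Fv, E, F_odd by auto; reflexivity).
    assert (Z : 2 * ellE (am u q) q - ellF (am u q) q = 0).
    { rewrite Fu. unfold u, v in *. nra. }
    apply EF_zero in Z; auto.
    rewrite Z, F_0 in Fu. unfold u, v in *. nra.
Qed.

Lemma sqrt_lip mu a b : 0 < mu -> mu <= a -> mu <= b ->
  Rabs (sqrt a - sqrt b) * (2 * sqrt mu) <= Rabs (a - b).
Proof.
  intros Hm Ha Hb.
  assert (sqrt mu <= sqrt a) by (apply sqrt_le_1_alt; lra).
  assert (sqrt mu <= sqrt b) by (apply sqrt_le_1_alt; lra).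
  assert (0 < sqrt mu) by (apply sqrt_lt_R0; lra).
  assert (a - b = (sqrt a - sqrt b) * (sqrt a + sqrt b)).
  { ring_simplify. rewrite !pow2_sqrt by lra. ring. }
  rewrite H2, Rabs_mult. rewrite (Rabs_right (sqrt a + sqrt b)) by lra.
  pose proof (Rabs_pos (sqrt a - sqrt b)). nra.
Qed.

Lemma diff_bound m q q' t : 0 <= m < 1 -> Rabs q <= m -> Rabs q' <= m ->
  Rabs ((1 - q ^ 2 * sin t ^ 2) - (1 - q' ^ 2 * sin t ^ 2)) <= 2 * Rabs (q - q').
Proof.
  intros Hm H1 H2. pose proof (sin2_bnd t).
  replace ((1 - q ^ 2 * sin t ^ 2) - (1 - q' ^ 2 * sin t ^ 2)) with ((q' - q) * (q' + q) * sin t ^ 2) by ring.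
  rewrite !Rabs_mult. rewrite (Rabs_right (sin t ^ 2)) by lra.
  assert (Rabs (q' + q) <= 2) by (pose proof (Rabs_triang q' q); lra).
  rewrite <- Rabs_Ropp. replace (- (q' - q)) with (q - q') by ring.
  pose proof (Rabs_pos (q - q')). pose proof (Rabs_pos (q' + q)).
  assert (Rabs (q - q') * Rabs (q' + q) * sin t ^ 2 <= Rabs (q - q') * Rabs (q' + q)).
  { rewrite <- (Rmult_1_r (Rabs (q - q') * Rabs (q' + q))) at 2. apply Rmult_le_compat_l; [nra|lra]. }
  nra.
Qed.

Lemma abs_sq_lt m q : 0 <= m < 1 -> Rabs q <= m -> q ^ 2 < 1 /\ 1 - m ^ 2 <= 1 - q ^ 2.
Proof.
  intros Hm H. assert (q ^ 2 = Rabs q ^ 2) by (unfold Rabs; destruct Rcase_abs; ring).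
  pose proof (Rabs_pos q). split; nra.
Qed.

Lemma ef_lip m q q' t : 0 <= m < 1 -> Rabs q <= m -> Rabs q' <= m ->
  Rabs (ef q t - ef q' t) <= / sqrt (1 - m ^ 2) * Rabs (q - q').
Proof.
  intros Hm H1 H2.
  destruct (abs_sq_lt m q Hm H1). destruct (abs_sq_lt m q' Hm H2).
  destruct (arg_pos q t H). destruct (arg_pos q' t H3).
  assert (0 < 1 - m ^ 2) by nra.
  pose proof (sqrt_lip (1 - m ^ 2) (1 - q ^ 2 * sin t ^ 2) (1 - q' ^ 2 * sin t ^ 2) H9 ltac:(lra) ltac:(lra)).
  pose proof (diff_bound m q q' t Hm H1 H2).
  assert (0 < sqrt (1 - m ^ 2)) by (apply sqrt_lt_R0; lra).
  unfold ef. apply Rmult_le_reg_r with (2 * sqrt (1 - m ^ 2)). lra.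
  eapply Rle_trans. apply H10. eapply Rle_trans. apply H11. right. field. lra.
Qed.

Lemma kf_lip m q q' t : 0 <= m < 1 -> Rabs q <= m -> Rabs q' <= m ->
  Rabs (kf q t - kf q' t) <= / sqrt (1 - m ^ 2) / (1 - m ^ 2) * Rabs (q - q').
Proof.
  intros Hm H1 H2.
  destruct (abs_sq_lt m q Hm H1). destruct (abs_sq_lt m q' Hm H2).
  destruct (arg_pos q t H). destruct (arg_pos q' t H3).
  assert (0 < 1 - m ^ 2) by nra.
  pose proof (ef_lip m q q' t Hm H1 H2). unfold ef in H10.
  set (A := 1 - q ^ 2 * sin t ^ 2) in *. set (B := 1 - q' ^ 2 * sin t ^ 2) in *.
  assert (sqrt (1 - m^2) <= sqrt A) by (apply sqrt_le_1_alt; lra).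
  assert (sqrt (1 - m^2) <= sqrt B) by (apply sqrt_le_1_alt; lra).
  assert (0 < sqrt (1 - m ^ 2)) by (apply sqrt_lt_R0; lra).
  assert (sqrt (1 - m ^ 2) * sqrt (1 - m ^ 2) = 1 - m ^ 2) by (apply sqrt_sqrt; lra).
  unfold kf. fold A B.
  replace (/ sqrt A - / sqrt B) with ((sqrt B - sqrt A) / (sqrt A * sqrt B)) by (field; split; lra).
  unfold Rdiv. rewrite Rabs_mult. rewrite Rabs_inv. rewrite (Rabs_right (sqrt A * sqrt B)) by nra.
  rewrite <- Rabs_Ropp. replace (- (sqrt B - sqrt A)) with (sqrt A - sqrt B) by ring.
  assert (/ (sqrt A * sqrt B) <= / (1 - m ^ 2)).
  { apply Rinv_le_contravar. lra. rewrite <- H14. apply Rmult_le_compat; lra. }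
  pose proof (Rabs_pos (sqrt A - sqrt B)). pose proof (Rabs_pos (q - q')).
  assert (0 < / (1 - m^2)) by (apply Rinv_0_lt_compat; lra).
  eapply Rle_trans. apply Rmult_le_compat_l. lra. apply H15.
  eapply Rle_trans. apply Rmult_le_compat_r. lra. apply H10.
  right. field. lra.
Qed.

Lemma cont_param (k : R -> R -> R) (Cf : R -> R) q0 : q0 ^ 2 < 1 ->
  (forall q a b, q ^ 2 < 1 -> ex_RInt (k q) a b) ->
  (forall m, 0 <= m < 1 -> 0 <= Cf m) ->
  (forall m q q' t, 0 <= m < 1 -> Rabs q <= m -> Rabs q' <= m -> Rabs (k q t - k q' t) <= Cf m * Rabs (q - q')) ->
  continuity_pt (fun q => RInt (k q) 0 (PI / 2)) q0.
Proof.
  intros Hq0 Hex HC Hlip.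
  assert (Ha : Rabs q0 < 1).
  { destruct (Rlt_or_le (Rabs q0) 1); auto. assert (q0 ^ 2 = Rabs q0 ^ 2) by (unfold Rabs; destruct Rcase_abs; ring). nra. }
  set (m := (1 + Rabs q0) / 2). pose proof (Rabs_pos q0).
  assert (Hm : 0 <= m < 1) by (unfold m; lra).
  apply lip_cont with (Cf m * (PI / 2)) ((1 - Rabs q0) / 2). lra.
  pose proof PI_RGT_0. pose proof (HC m Hm). nra.
  intros q Hq.
  assert (Hqm : Rabs q <= m).
  { unfold m. pose proof (Rabs_triang (q - q0) q0). replace (q - q0 + q0) with q in H0 by ring. lra. }
  assert (Hq0m : Rabs q0 <= m) by (unfold m; lra).
  destruct (abs_sq_lt m q Hm Hqm) as [Hq2 _].
  rewrite <- (RInt_minus (V:=R_CompleteNormedModule)) by auto.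
  pose proof PI_RGT_0.
  replace (Rabs (q - q0)) with (Rabs (PI/2 - 0) * Rabs (q - q0) / (PI/2))
    by (rewrite Rabs_right by lra; field; lra).
  eapply Rle_trans. apply (RInt_abs_bound (fun x => minus (k q x) (k q0 x)) 0 (PI/2) (Cf m * Rabs (q - q0))).
  intros; apply (ex_RInt_minus (V:=R_CompleteNormedModule)); auto.
  intros t. apply Hlip; auto.
  right. rewrite (Rabs_right (PI/2 - 0)) by lra. field. lra.
Qed.

Lemma K_cont q : q ^ 2 < 1 -> continuity_pt ellK q.
Proof.
  intros Hq. apply (cont_param kf (fun m => / sqrt (1 - m ^ 2) / (1 - m ^ 2))); auto.
  intros; apply kf_ex; auto.
  intros m Hm. assert (0 < 1 - m^2) by nra. assert (0 < sqrt (1 - m^2)) by (apply sqrt_lt_R0; lra).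
  unfold Rdiv. left. apply Rmult_lt_0_compat; apply Rinv_0_lt_compat; lra.
  intros; apply kf_lip; auto.
Qed.

Lemma Ec_cont q : q ^ 2 < 1 -> continuity_pt ellEc q.
Proof.
  intros Hq. apply (cont_param ef (fun m => / sqrt (1 - m ^ 2))); auto.
  intros; apply ef_ex; auto.
  intros m Hm. assert (0 < 1 - m^2) by nra. assert (0 < sqrt (1 - m^2)) by (apply sqrt_lt_R0; lra).
  left. apply Rinv_0_lt_compat; lra.
  intros; apply ef_lip; auto.
Qed.

Definition gint (q t : R) : R := cos t / (1 - q ^ 2 * sin t ^ 2).
Definition Gp (q t : R) : R := / (2 * q) * ln ((1 + q * sin t) / (1 - q * sin t)).

Lemma sin_bnd t : -1 <= sin t <= 1.
Proof. pose proof (SIN_bound t). lra. Qed.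

Lemma gint_is q : 0 < q < 1 -> is_RInt (gint q) 0 (PI / 2) (Gp q (PI/2) - Gp q 0).
Proof.
  intros Hq.
  apply (is_RInt_derive (V:=R_CompleteNormedModule) (Gp q) (gint q)).
  - intros x _. pose proof (sin_bnd x).
    assert (0 < 1 - q * sin x) by nra. assert (0 < 1 + q * sin x) by nra.
    unfold Gp, gint. auto_derive.
    + split; [lra|split; [|easy]]. apply Rmult_lt_0_compat; [lra| apply Rinv_0_lt_compat; lra].
    + field. repeat split; try lra. nra.
  - intros x _. apply (@ex_derive_continuous R_AbsRing R_NormedModule).
    pose proof (sin2_bnd x). unfold gint. auto_derive. repeat split.
    assert (q ^ 2 < 1) by nra. nra.
Qed.

Lemma Gp_val q : 0 < q < 1 -> Gp q (PI/2) - Gp q 0 = / (2 * q) * ln ((1 + q) / (1 - q)).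
Proof.
  intros Hq. unfold Gp. rewrite sin_PI2, sin_0.
  replace ((1 + q * 0) / (1 - q * 0)) with 1 by (field).
  rewrite ln_1. replace (q * 1) with q by ring. ring.
Qed.

Lemma cos_le_sqrt q t : q ^ 2 < 1 -> cos t <= sqrt (1 - q ^ 2 * sin t ^ 2).
Proof.
  intros Hq. destruct (arg_pos q t Hq). pose proof (sin2_bnd t).
  destruct (Rle_or_lt (cos t) 0). apply Rle_trans with 0; auto. apply sqrt_pos.
  rewrite <- (sqrt_pow2 (cos t)) by lra. apply sqrt_le_1_alt.
  pose proof (cos2 t). unfold Rsqr in H3. nra.
Qed.

Lemma psi_le q t : q ^ 2 < 1 -> psi q t <= 2 - gint q t.
Proof.
  intros Hq. unfold psi, gint. pose proof (ef_le1 q t Hq).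
  destruct (arg_pos q t Hq).
  pose proof (cos_le_sqrt q t Hq).
  set (A := 1 - q ^ 2 * sin t ^ 2) in *.
  assert (0 < sqrt A) by (apply sqrt_lt_R0; lra).
  assert (sqrt A * sqrt A = A) by (apply sqrt_sqrt; lra).
  assert (cos t / A <= kf q t).
  { unfold kf. fold A. apply Rmult_le_reg_r with A. lra.
    unfold Rdiv. rewrite Rmult_assoc, Rinv_l by lra. rewrite <- H4 at 2.
    rewrite <- Rmult_assoc, Rinv_l by lra. lra. }
  lra.
Qed.

Lemma exp8 : exp 8 < 19999.
Proof.
  pose proof exp_le_3. pose proof (exp_pos 1).
  replace 8 with (((1+1)+(1+1))+((1+1)+(1+1))) by ring. rewrite !exp_plus.
  assert (exp 1 * exp 1 <= 9) by nra.
  assert (exp 1 * exp 1 * (exp 1 * exp 1) <= 81) by nra.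
  nra.
Qed.

Definition q0 : R := 9999 / 10000.

Lemma hq_q0 : hq q0 < 0.
Proof.
  assert (Hq : 0 < q0 < 1) by (unfold q0; lra).
  assert (Hq2 : q0 ^ 2 < 1) by nra.
  pose proof PI_RGT_0. pose proof PI_4.
  assert (Hi : is_RInt (fun t => 2 - gint q0 t) 0 (PI/2) ((PI/2 - 0) * 2 - (/ (2 * q0) * ln ((1 + q0) / (1 - q0))))).
  { rewrite <- Gp_val by auto.
    apply (is_RInt_minus (V:=R_NormedModule) (fun _ => 2) (gint q0)).
    apply (is_RInt_const (V:=R_NormedModule)). apply gint_is; auto. }
  assert (hq q0 <= RInt (fun t => 2 - gint q0 t) 0 (PI/2)).
  { rewrite hq_int by auto. apply RInt_le. lra. apply psi_ex; auto. eexists; apply Hi.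
    intros; apply psi_le; auto. }
  rewrite (is_RInt_unique _ _ _ _ Hi) in H1.
  assert (E1 : (1 + q0) / (1 - q0) = 19999) by (unfold q0; field).
  rewrite E1 in H1.
  assert (8 < ln 19999).
  { rewrite <- (ln_exp 8). apply ln_increasing. apply exp_pos. apply exp8. }
  assert (/ (2 * q0) * ln 19999 > PI).
  { apply Rmult_lt_reg_l with (2 * q0). lra. rewrite <- Rmult_assoc, Rinv_r by lra.
    unfold q0 in *. lra. }
  lra.
Qed.

Lemma hq_sqrt2 : 0 < hq (/ sqrt 2).
Proof.
  set (q := / sqrt 2).
  assert (Hq2 : q ^ 2 = 1 / 2).
  { unfold q. rewrite pow_inv. rewrite pow2_sqrt by lra. field. }
  assert (Hq : q ^ 2 < 1) by lra.
  pose proof PI_RGT_0.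
  assert (Hp : forall t, 0 <= psi q t /\ (sin t ^ 2 <= 1/2 -> 1/2 <= psi q t)).
  { intros t. unfold psi, ef, kf. rewrite Hq2. pose proof (sin2_bnd t).
    set (A := 1 - 1/2 * sin t ^ 2).
    assert (SA : 0 < sqrt A) by (apply sqrt_lt_R0; unfold A; lra).
    assert (SS : sqrt A * sqrt A = A) by (apply sqrt_sqrt; unfold A; lra).
    assert (S1 : sqrt A <= 1) by (apply Rle_trans with (sqrt 1); [apply sqrt_le_1_alt; unfold A; lra | rewrite sqrt_1; lra]).
    assert (E5 : 2 * sqrt A - / sqrt A = (1 - sin t ^ 2) / sqrt A).
    { replace (2 * sqrt A - / sqrt A) with ((2 * (sqrt A * sqrt A) - 1) / sqrt A) by (field; lra).
      rewrite SS. replace (2 * A - 1) with (1 - sin t ^ 2) by (unfold A; field). reflexivity. }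
    rewrite E5. split.
    apply Rdiv_le_0_compat; lra.
    intros Hs. apply Rmult_le_reg_r with (sqrt A). lra.
    replace ((1 - sin t ^ 2) / sqrt A * sqrt A) with (1 - sin t ^ 2) by (field; lra). nra. }
  rewrite hq_int by auto.
  rewrite <- (RInt_Chasles (V:=R_CompleteNormedModule) (psi q) 0 (PI/4) (PI/2)) by (apply psi_ex; auto).
  unfold plus; simpl.
  assert ((PI/4 - 0) * (1/2) <= RInt (psi q) 0 (PI/4)).
  { apply RInt_lower. lra. apply psi_ex; auto. intros t Ht. apply Hp.
    assert (0 <= sin t) by (apply sin_ge_0; lra).
    assert (sin t <= sin (PI/4)) by (apply sin_incr_1; lra).
    rewrite sin_PI4 in H1.
    assert ((1 / sqrt 2) ^ 2 = 1/2) by (unfold Rdiv; rewrite Rmult_1_l, pow_inv, pow2_sqrt by lra; field).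
    assert (sin t ^ 2 <= (1 / sqrt 2) ^ 2) by (apply pow_incr; lra). lra. }
  assert ((PI/2 - PI/4) * 0 <= RInt (psi q) (PI/4) (PI/2)).
  { apply RInt_lower. lra. apply psi_ex; auto. intros t Ht. apply Hp. }
  nra.
Qed.

Lemma cpt_mul f g x : continuity_pt f x -> continuity_pt g x -> continuity_pt (fun y => f y * g y) x.
Proof. apply continuity_pt_mult. Qed.
Lemma cpt_add f g x : continuity_pt f x -> continuity_pt g x -> continuity_pt (fun y => f y + g y) x.
Proof. apply continuity_pt_plus. Qed.
Lemma cpt_sub f g x : continuity_pt f x -> continuity_pt g x -> continuity_pt (fun y => f y - g y) x.
Proof. apply continuity_pt_minus. Qed.
Lemma cpt_cst (c : R) x : continuity_pt (fun _ => c) x.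
Proof. apply continuity_pt_const. intros a b; reflexivity. Qed.
Lemma cpt_id x : continuity_pt (fun y => y) x.
Proof. apply derivable_continuous_pt. apply derivable_pt_id. Qed.
Lemma cpt_pow f n x : continuity_pt f x -> continuity_pt (fun y => f y ^ n) x.
Proof.
  intros H. induction n. apply (cpt_cst 1).
  apply (cpt_mul f (fun y => f y ^ n)); auto.
Qed.

Lemma cpt_opp f x : continuity_pt f x -> continuity_pt (fun y => - f y) x.
Proof. apply continuity_pt_opp. Qed.

Ltac cpt := repeat (first [apply cpt_cst | apply cpt_id | apply cpt_sub | apply cpt_add | apply cpt_opp
   | apply cpt_mul | apply cpt_pow | apply K_cont | apply Ec_cont]).

Lemma hq_cont q : q ^ 2 < 1 -> continuity_pt hq q.
Proof. intros. unfold hq. cpt; auto. Qed.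
Lemma f_cont q : q ^ 2 < 1 -> continuity_pt f_ell q.
Proof. intros. unfold f_ell. cpt; auto. Qed.
Lemma g_cont q : q ^ 2 < 1 -> continuity_pt g_ell q.
Proof. intros. unfold g_ell. cpt; auto. Qed.

Lemma s2_facts : 0 < / sqrt 2 /\ (/ sqrt 2) ^ 2 = 1 / 2 /\ / sqrt 2 < q0.
Proof.
  assert (0 < sqrt 2) by (apply sqrt_lt_R0; lra).
  assert (0 < / sqrt 2) by (apply Rinv_0_lt_compat; auto).
  assert (E : (/ sqrt 2) ^ 2 = 1 / 2) by (rewrite pow_inv, pow2_sqrt by lra; field).
  split; auto. split; auto. unfold q0 in *.
  destruct (Rlt_or_le (/ sqrt 2) (9999/10000)); auto. nra.
Qed.

Lemma sq_lt1 q : 0 <= q < 1 -> q ^ 2 < 1.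
Proof. intros; nra. Qed.

Lemma qstar_spec : 0 < qstar < 1 /\ hq qstar = 0.
Proof.
  destruct s2_facts as [S0 [S2 S3]].
  apply (epsilon_spec (inhabits 0) (fun q => 0 < q < 1 /\ 2 * ellEc q - ellK q = 0)).
  destruct (IVT_decr hq (/ sqrt 2) q0 0) as [x [Hx Hx']].
  lra. intros x Hx. apply hq_cont, sq_lt1. unfold q0 in *; lra.
  pose proof hq_q0. pose proof hq_sqrt2. lra.
  exists x. unfold q0 in *. split; [lra|exact Hx'].
Qed.

Lemma qstar_bnd : / sqrt 2 < qstar < q0.
Proof.
  destruct s2_facts as [S0 [S2 S3]]. destruct qstar_spec as [H1 H2].
  split.
  - destruct (Rlt_or_le (/ sqrt 2) qstar); auto.
    pose proof (hq_mono qstar (/ sqrt 2) ltac:(lra) ltac:(lra)). pose proof hq_sqrt2. lra.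
  - destruct (Rlt_or_le qstar q0); auto.
    pose proof (hq_mono q0 qstar ltac:(unfold q0 in *; lra) ltac:(apply sq_lt1; lra)). pose proof hq_q0. lra.
Qed.

Lemma Ec_pos q : q ^ 2 < 1 -> 0 < ellEc q.
Proof.
  intros Hq. pose proof PI_RGT_0.
  assert ((PI/2 - 0) * sqrt (1 - q ^ 2) <= ellEc q).
  { apply RInt_lower. lra. apply ef_ex; auto. intros; apply ef_ge; auto. }
  assert (0 < sqrt (1 - q^2)) by (apply sqrt_lt_R0; lra). nra.
Qed.

Lemma f_neg q : 1 / 2 < q ^ 2 < 1 -> hq q <= 0 -> f_ell q < 0.
Proof.
  intros Hq Hh. pose proof (Ec_pos q ltac:(lra)). unfold hq in Hh. unfold f_ell.
  set (p := q ^ 2) in *.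
  replace (q ^ 4) with (p ^ 2) by (unfold p; ring).
  assert ((4 * p ^ 2 - 5 * p + 1) < 0) by nra.
  assert ((4 * p ^ 2 - 5 * p + 1) * ellK q <= (4 * p ^ 2 - 5 * p + 1) * (2 * ellEc q)) by nra.
  nra.
Qed.

Lemma f_half q : q ^ 2 = 1 / 2 -> f_ell q = hq q / 2.
Proof.
  intros Hq. unfold f_ell, hq. replace (q ^ 4) with ((q ^ 2) ^ 2) by ring. rewrite Hq. field.
Qed.

Lemma qhat_spec : / sqrt 2 <= qhat < 1 /\ f_ell qhat = 0.
Proof.
  destruct s2_facts as [S0 [S2 S3]]. destruct qstar_bnd as [B1 B2]. destruct qstar_spec as [H1 H2].
  apply (epsilon_spec (inhabits 0) (fun q => / sqrt 2 <= q < 1 /\ f_ell q = 0)).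
  destruct (IVT_decr f_ell (/ sqrt 2) qstar 0) as [x [Hx Hx']].
  lra. intros x Hx. apply f_cont, sq_lt1. lra.
  split. left. apply f_neg. split. nra. apply sq_lt1; lra. lra.
  rewrite f_half by auto. pose proof hq_sqrt2. lra.
  exists x. split; [lra|exact Hx'].
Qed.

Lemma qhat_bnd : 0 < hq qhat /\ qhat < qstar.
Proof.
  destruct s2_facts as [S0 [S2 S3]]. destruct qstar_bnd as [B1 B2]. destruct qstar_spec as [H1 H2].
  destruct qhat_spec as [Q1 Q2].
  assert (Hh : 0 < hq qhat).
  { destruct (Rlt_or_le 0 (hq qhat)) as [h|h]; auto.
    assert (1/2 <= qhat ^ 2) by nra.
    destruct (Req_dec (qhat ^ 2) (1/2)) as [E|E].
    - assert (Eq : qhat = / sqrt 2) by nra. rewrite Eq in h. pose proof hq_sqrt2. lra.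
    - assert (f_ell qhat < 0) by (apply f_neg; auto; split; [lra| apply sq_lt1; lra]). lra. }
  split; auto.
  destruct (Rlt_or_le qhat qstar) as [h|h]; auto.
  pose proof (hq_mono qstar qhat ltac:(lra) ltac:(apply sq_lt1; lra)). lra.
Qed.

Lemma g_sqrt2 : g_ell (/ sqrt 2) = 0.
Proof. destruct s2_facts as [_ [S2 _]]. unfold g_ell. rewrite S2. replace (2 * (1 / 2) - 1) with 0 by field. ring. Qed.

Lemma g_qstar : g_ell qstar = 0.
Proof. destruct qstar_spec as [_ H]. unfold g_ell. fold (hq qstar). rewrite H. ring. Qed.

Lemma good_q q c : 0 < c -> 0 < q -> q < qstar -> g_ell q = c -> 0 < q < 1 /\ 0 < hq q.
Proof.
  intros Hc H1 H2 H3. destruct s2_facts as [S0 [S2 S3]]. destruct qstar_spec as [Q1 Q2].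
  split. lra.
  pose proof (hq_mono q qstar ltac:(lra) ltac:(apply sq_lt1; lra)).
  destruct (Req_dec (hq q) 0) as [E|E].
  - unfold g_ell in H3. fold (hq q) in H3. rewrite E in H3. lra.
  - lra.
Qed.

Lemma q1_good c : 0 < c <= lamhat -> 0 < q1 c < 1 /\ 0 < hq (q1 c).
Proof.
  intros Hc. destruct s2_facts as [S0 [S2 S3]]. destruct qstar_bnd as [B1 B2].
  destruct qhat_spec as [Q1 Q2]. destruct qhat_bnd as [Q3 Q4].
  assert (Hs : / sqrt 2 < q1 c <= qhat /\ g_ell (q1 c) = c).
  { apply (epsilon_spec (inhabits 0) (fun q => / sqrt 2 < q <= qhat /\ g_ell q = c)).
    destruct (IVT_incr g_ell (/ sqrt 2) qhat c) as [x [Hx Hx']]. lra.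
    intros x Hx. apply g_cont, sq_lt1. lra.
    rewrite g_sqrt2. unfold lamhat in Hc. lra.
    exists x. split; auto. split; [|lra].
    destruct Hx as [[h|h] _]; auto. rewrite <- h, g_sqrt2 in Hx'. lra. }
  destruct Hs as [Hs1 Hs2]. apply (good_q _ c); auto; lra.
Qed.

Lemma q2_good c : 0 < c <= lamhat -> 0 < q2 c < 1 /\ 0 < hq (q2 c).
Proof.
  intros Hc. destruct s2_facts as [S0 [S2 S3]]. destruct qstar_bnd as [B1 B2].
  destruct qhat_spec as [Q1 Q2]. destruct qhat_bnd as [Q3 Q4].
  assert (Hs : qhat <= q2 c < qstar /\ g_ell (q2 c) = c).
  { apply (epsilon_spec (inhabits 0) (fun q => qhat <= q < qstar /\ g_ell q = c)).
    destruct (IVT_decr g_ell qhat qstar c) as [x [Hx Hx']]. lra.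
    intros x Hx. apply g_cont, sq_lt1. unfold q0 in *. lra.
    rewrite g_qstar. unfold lamhat in Hc. lra.
    exists x. split; auto. split; [lra|].
    destruct Hx as [_ [h|h]]; auto. rewrite h, g_qstar in Hx'. lra. }
  destruct Hs as [Hs1 Hs2]. apply (good_q _ c); auto; lra.
Qed.

Theorem lemma5p2 (lam l : R) (Hlam : 0 < lam) (Hl : 0 < l) (c : curve) :
  omega lam l c ->
  forall x y : R, 0 <= x <= 1 -> 0 <= y <= 1 -> c x = c y -> x = y.
Proof.
  intros Hom x y Hx Hy Hxy.
  assert (Hseg : c = gamma_seg l -> x = y).
  { intros ->. unfold gamma_seg in Hxy. injection Hxy as H.
    apply Rmult_eq_reg_l in H; lra. }
  assert (Hc : 0 < lam * l ^ 2) by (apply Rmult_lt_0_compat; [lra | apply pow_lt; lra]).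
  unfold omega in Hom. destruct (Rle_dec (lam * l ^ 2) lamhat) as [Hle|Hle].
  - destruct Hom as [H|[H|H]]; auto; subst c.
    + unfold gamma_larc_bar in Hxy. destruct (q2_good (lam * l ^ 2)) as [G1 G2]. lra.
      exact (gamma_bar_inj _ l G1 G2 Hl x y Hx Hy Hxy).
    + unfold gamma_sarc_bar in Hxy. destruct (q1_good (lam * l ^ 2)) as [G1 G2]. lra.
      exact (gamma_bar_inj _ l G1 G2 Hl x y Hx Hy Hxy).
  - auto.
Qed.
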